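(* Let $\mathcal U(\mathbb R)$ be the family of open subsets of $\mathbb R$, and let $F:\mathcal U(\mathbb R)\to\mathcal U(\mathbb R)$ be a bijection satisfying $F(U_1\cap U_2)=F(U_1)\cap F(U_2)$ for all $U_1,U_2\in\mathcal U(\mathbb R)$. Then there exists a bijection $u:\mathbb R\to\mathbb R$ such that $F(U)=\{u(x):x\in U\}$ for every open $U\subset\mathbb R$. *)

(* Defs.v *)
From Stdlib Require Import Reals Rtopology.
Open Scope R_scope.

Definition OpenSet : Type := { U : R -> Prop | open_set U }.

Definition carrier (U : OpenSet) : R -> Prop := proj1_sig U.

(* Main.v *)
Require Import Defs.
From Stdlib Require Import Reals Rtopology Lra.
From Stdlib Require Import Classical FunctionalExtensionality PropExtensionality ProofIrrelevance IndefiniteDescription.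
Open Scope R_scope.

Lemma os_ext (U V : OpenSet) : (forall x, carrier U x <-> carrier V x) -> U = V.
Proof.
  destruct U as [U HU], V as [V HV]; unfold carrier; simpl; intros H.
  assert (U = V) by (apply functional_extensionality; intro; apply propositional_extensionality; apply H).
  subst; f_equal; apply proof_irrelevance.
Qed.

Lemma compl_open (x : R) : open_set (fun z => z <> x).
Proof.
  intros z Hz. assert (Hp : 0 < Rabs (z - x)) by (apply Rabs_pos_lt; intro; apply Hz; lra).
  exists (mkposreal _ Hp). intros y Hy; unfold disc in Hy; simpl in Hy.
  intro; subst. rewrite Rabs_minus_sym in Hy; lra.
Qed.

Definition Cx (x : R) : OpenSet := exist _ (fun z => z <> x) (compl_open x).
Definition Full : OpenSet := exist _ (fun _ => True) open_set_P5.
Definition Inter (U V : OpenSet) : OpenSet :=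
  exist _ (intersection_domain (carrier U) (carrier V))
    (open_set_P3 _ _ (proj2_sig U) (proj2_sig V)).

Theorem lemmaB1 (F : OpenSet -> OpenSet)
  (F_inj : forall U1 U2 : OpenSet, F U1 = F U2 -> U1 = U2)
  (F_surj : forall V : OpenSet, exists U : OpenSet, F U = V)
  (F_cap : forall U1 U2 W : OpenSet,
      (forall x, carrier W x <-> (carrier U1 x /\ carrier U2 x)) ->
      forall y, carrier (F W) y <-> (carrier (F U1) y /\ carrier (F U2) y)) :
  exists u : R -> R,
    (forall x1 x2 : R, u x1 = u x2 -> x1 = x2) /\
    (forall y : R, exists x : R, u x = y) /\
    (forall (U : OpenSet) (y : R),
        carrier (F U) y <-> exists x : R, carrier U x /\ y = u x).
Proof.
  assert (mono : forall U V : OpenSet, (forall x, carrier U x -> carrier V x) ->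
                 forall y, carrier (F U) y -> carrier (F V) y).
  { intros U V H y Hy. exact (proj2 (proj1 (F_cap U V U (fun x => conj (fun h => conj h (H x h)) (fun h => proj1 h)) y) Hy)). }
  assert (refl : forall U V : OpenSet, (forall y, carrier (F U) y -> carrier (F V) y) ->
                 forall x, carrier U x -> carrier V x).
  { intros U V H x Hx.
    assert (E : Inter U V = U).
    { apply F_inj, os_ext. intro y. rewrite (F_cap U V (Inter U V) (fun z => iff_refl _)).
      split; [tauto| intro h; split; auto]. }
    rewrite <- E in Hx. exact (proj2 Hx). }
  assert (full : forall y, carrier (F Full) y).
  { intro y. destruct (F_surj Full) as [U HU]. apply (mono U Full (fun _ _ => I)).
    rewrite HU; exact I. }
  assert (notfull : forall V y, ~ carrier (F V) y -> exists z, ~ carrier V z).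
  { intros V y Hy. apply NNPP; intro H. apply Hy.
    apply (mono Full V); [|apply full]. intros x _. apply NNPP; intro; apply H; eauto. }
  assert (ex : forall x, { y : R | forall z, carrier (F (Cx x)) z <-> z <> y }).
  { intro x. apply constructive_indefinite_description.
    assert (exists y, ~ carrier (F (Cx x)) y) as [y Hy].
    { apply NNPP; intro H. assert (F (Cx x) = F Full).
      { apply os_ext; intro z; split; intro; [apply full|]. apply NNPP; intro; apply H; eauto. }
      apply F_inj in H0. assert (carrier Full x) by exact I. rewrite <- H0 in H1. apply H1; auto. }
    exists y. destruct (F_surj (Cx y)) as [V HV].
    assert (sub1 : forall z, carrier (F (Cx x)) z -> carrier (F V) z).
    { intros z Hz; rewrite HV; simpl; intro; subst; auto. }
    pose proof (refl _ _ sub1) as sub2.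
    destruct (notfull V y) as [w Hw]. { rewrite HV; simpl; auto. }
    assert (w = x) by (apply NNPP; intro; apply Hw, sub2; simpl; auto). subst w.
    assert (sub3 : forall z, carrier V z -> carrier (Cx x) z).
    { intros z Hz; simpl; intro; subst; auto. }
    intro z; split.
    - intros Hz. pose proof (sub1 z Hz) as h; rewrite HV in h; exact h.
    - intros Hz. apply (mono V); auto. rewrite HV; simpl; auto. }
  set (u := fun x => proj1_sig (ex x)).
  assert (Hu : forall x z, carrier (F (Cx x)) z <-> z <> u x) by (intros; exact (proj2_sig (ex x) z)).
  assert (inj : forall x1 x2, u x1 = u x2 -> x1 = x2).
  { intros x1 x2 E. apply NNPP; intro Hn.
    assert (H : forall y, carrier (F (Cx x1)) y -> carrier (F (Cx x2)) y).
    { intros y Hy; rewrite Hu in *; rewrite <- E; auto. }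
    apply (refl _ _ H x2); simpl; auto. }
  assert (surj : forall y, exists x, u x = y).
  { intro y. destruct (F_surj (Cx y)) as [V HV].
    destruct (notfull V y) as [x Hx]. { rewrite HV; simpl; auto. }
    exists x. apply NNPP; intro Hn.
    assert (H : forall z, carrier V z -> carrier (Cx x) z) by (intros z Hz; simpl; intro; subst; auto).
    pose proof (mono _ _ H (u x)). rewrite HV in H0. simpl in H0.
    apply (proj1 (Hu x (u x))); auto. }
  exists u; split; [exact inj|split; [exact surj|]].
  intros U y; split.
  - intro Hy. destruct (surj y) as [x Hx]. exists x; split; auto.
    apply NNPP; intro Hn.
    assert (H : forall z, carrier U z -> carrier (Cx x) z) by (intros z Hz; simpl; intro; subst; auto).
    apply (proj1 (Hu x y) (mono _ _ H y Hy)); auto.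
  - intros [x [Hx ->]]. apply NNPP; intro Hn.
    assert (H : forall z, carrier (F U) z -> carrier (F (Cx x)) z).
    { intros z Hz; rewrite Hu; intro; subst; auto. }
    apply (refl _ _ H x Hx); simpl; auto.
Unshelve. all: exact 0. Qed.
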